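(* Let $\varphi:[0,1]\to[0,1]$ be continuous and non-decreasing with $\varphi(0)=0$, $\varphi(1)=1$, and let $m\geq1$ be an integer. Call $\psi:[0,1]\to\mathbb R$ piecewise constant with $m+1$ pieces if there exist $0=t_0\leq t_1\leq\dots\leq t_m\leq t_{m+1}=1$ such that $\psi$ is constant on each $[t_{i-1},t_i)$, $i=1,\dots,m+1$. Then there exists a piecewise constant $\psi$ with $m+1$ pieces and $\psi\leq\varphi$ on $[0,1]$ that attains $$c_m=\inf\left\{\int_0^1(\varphi(t)-\psi(t))\,dt:\ \psi \text{ piecewise constant with } m+1 \text{ pieces},\ \psi\leq\varphi\right\}.$$ *)

(* Defs.v *)
From Stdlib Require Import Reals.
From Coquelicot Require Import Coquelicot.
Open Scope R_scope.

Definition piecewise_const (m : nat) (psi : R -> R) : Prop :=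
  exists (t : nat -> R) (c : nat -> R),
    t 0%nat = 0 /\ t (S m) = 1 /\
    (forall i : nat, (i <= m)%nat -> t i <= t (S i)) /\
    (forall i : nat, (1 <= i <= S m)%nat ->
       forall x : R, t (pred i) <= x < t i -> psi x = c i).

Definition admissible (phi : R -> R) (m : nat) (psi : R -> R) : Prop :=
  piecewise_const m psi /\ (forall x : R, 0 <= x <= 1 -> psi x <= phi x).

Definition c_m (phi : R -> R) (m : nat) : Rbar :=
  Glb_Rbar (fun r : R => exists psi : R -> R,
              admissible phi m psi /\ r = RInt (fun t => phi t - psi t) 0 1).

(* Main.v *)
Require Import Defs.
From Stdlib Require Import Reals Lra Lia ClassicalEpsilon.
From Coquelicot Require Import Coquelicot.
Open Scope R_scope.

Definition clamp (x : R) : R := Rmax 0 (Rmin 1 x).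

Lemma clamp_in x : 0 <= clamp x <= 1.
Proof. unfold clamp, Rmax, Rmin; repeat destruct Rle_dec; lra. Qed.

Lemma clamp_id x : 0 <= x <= 1 -> clamp x = x.
Proof. intros; unfold clamp, Rmax, Rmin; repeat destruct Rle_dec; lra. Qed.

Lemma clamp_lip x y : Rabs (clamp x - clamp y) <= Rabs (x - y).
Proof.
  unfold clamp, Rmax, Rmin; repeat destruct Rle_dec; unfold Rabs;
  repeat destruct Rcase_abs; lra.
Qed.

Definition UC (f : R -> R) : Prop :=
  forall eps, 0 < eps -> exists delta, 0 < delta /\
    forall x y, 0 <= x <= 1 -> 0 <= y <= 1 -> Rabs (x - y) < delta ->
      Rabs (f x - f y) < eps.

Lemma cont_clamp (phi : R -> R)
  (Hcont : forall x : R, 0 <= x <= 1 -> continue_in phi (fun y => 0 <= y <= 1) x) :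
  forall x, continuity_pt (fun y => phi (clamp y)) x.
Proof.
  intros x. unfold continuity_pt, continue_in, limit1_in, limit_in; simpl.
  intros eps Heps.
  destruct (Hcont (clamp x) (clamp_in x) eps Heps) as [alp [Halp H]].
  exists alp; split; [exact Halp|].
  intros y [_ Hy]. unfold R_dist in *.
  destruct (Req_dec (clamp y) (clamp x)) as [E|E].
  - rewrite E. unfold Rminus; rewrite Rplus_opp_r, Rabs_R0; exact Heps.
  - apply H. split.
    + split; [apply clamp_in| intro; apply E; auto].
    + simpl. unfold R_dist. eapply Rle_lt_trans; [apply clamp_lip|exact Hy].
Qed.

Lemma UC_phi (phi : R -> R)
  (Hcont : forall x : R, 0 <= x <= 1 -> continue_in phi (fun y => 0 <= y <= 1) x) :
  UC phi.
Proof.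
  intros eps Heps.
  assert (HU := Heine (fun y => phi (clamp y)) (fun c => 0 <= c <= 1) (compact_P3 0 1)
    (fun x _ => cont_clamp phi Hcont x)).
  destruct (HU (mkposreal eps Heps)) as [d Hd].
  exists d; split; [apply cond_pos|].
  intros x y Hx Hy Hxy.
  specialize (Hd x y Hx Hy Hxy). rewrite !clamp_id in Hd; auto.
Qed.

Lemma ex_RInt_phi (phi : R -> R)
  (Hcont : forall x : R, 0 <= x <= 1 -> continue_in phi (fun y => 0 <= y <= 1) x) :
  ex_RInt phi 0 1.
Proof.
  apply (ex_RInt_ext (fun y => phi (clamp y))).
  - intros x Hx. rewrite Rmin_left, Rmax_right in Hx by lra. rewrite clamp_id; auto; lra.
  - apply (@ex_RInt_continuous R_CompleteNormedModule). intros z _.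
    apply continuity_pt_filterlim. apply cont_clamp; auto.
Qed.

Lemma gb (a b s s' u : R) : 0 <= b <= 1 -> 0 <= u - s <= 1 ->
  Rabs (a*(u-s) - b*(u-s')) <= Rabs (a-b) + Rabs (s - s').
Proof.
  intros Hb Hu.
  replace (a*(u-s) - b*(u-s')) with ((a-b)*(u-s) + b*(s'-s)) by ring.
  eapply Rle_trans; [apply Rabs_triang|].
  rewrite !Rabs_mult. rewrite (Rabs_pos_eq (u-s)) by lra.
  rewrite (Rabs_pos_eq b) by lra. rewrite (Rabs_minus_sym s' s).
  assert (0 <= Rabs (a-b)) by apply Rabs_pos.
  assert (0 <= Rabs (s-s')) by apply Rabs_pos.
  assert (Rabs (a-b) * (u-s) <= Rabs (a-b) * 1) by (apply Rmult_le_compat_l; lra).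
  assert (b * Rabs (s-s') <= 1 * Rabs (s-s')) by (apply Rmult_le_compat_r; lra).
  assert (0 <= Rabs (s-s')) by apply Rabs_pos.
  assert (Rabs (a-b) * (u-s) <= Rabs (a-b) * 1) by (apply Rmult_le_compat_l; lra).
  assert (b * Rabs (s-s') <= 1 * Rabs (s-s')) by (apply Rmult_le_compat_r; lra).
  lra.
Qed.
Definition feas (s : R) (k : nat) (u : nat -> R) : Prop :=
  u 0%nat = s /\ u (S k) = 1 /\ forall i, (i <= k)%nat -> u i <= u (S i).

Definition Ssum (phi : R -> R) (k : nat) (u : nat -> R) : R :=
  sum_f_R0 (fun i => phi (u i) * (u (S i) - u i)) k.

Lemma chain (u : nat -> R) (k : nat) :
  (forall i, (i <= k)%nat -> u i <= u (S i)) ->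
  forall i j, (i <= j <= S k)%nat -> u i <= u j.
Proof.
  intros H i j. induction j as [|j IH]; intros Hij.
  - assert (i = 0%nat) by lia. subst; lra.
  - destruct (Nat.eq_dec i (S j)) as [->|Hne]; [lra|].
    eapply Rle_trans; [apply IH; lia| apply H; lia].
Qed.

Lemma feas_range s k u : feas s k u -> forall i, (i <= S k)%nat -> s <= u i <= 1.
Proof.
  intros [H0 [H1 H]] i Hi. split.
  - rewrite <- H0. apply (chain u k H); lia.
  - rewrite <- H1. apply (chain u k H); lia.
Qed.

Lemma abs_le_b x a : Rabs x <= a -> x <= a /\ -a <= x.
Proof. unfold Rabs; destruct Rcase_abs; intros; split; lra. Qed.

Lemma argmax (phi V : R -> R) (Hr : forall x, 0 <= x <= 1 -> 0 <= phi x <= 1)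
  (HV : UC V) (s : R) : 0 <= s <= 1 ->
  exists w, s <= w <= 1 /\ forall v, s <= v <= 1 ->
    phi s * (v - s) + V v <= phi s * (w - s) + V w.
Proof.
  intros Hs.
  destruct (continuity_ab_maj (fun u => phi s * (u - s) + V (clamp u)) s 1) as [w [Hw1 Hw2]].
  - lra.
  - intros c _. unfold continuity_pt, continue_in, limit1_in, limit_in; simpl.
    intros eps Heps. destruct (HV (eps/2)) as [d [Hd HdV]]; [lra|].
    exists (Rmin d (eps/2)); split; [apply Rmin_glb_lt; lra|].
    intros x [_ Hx]. unfold R_dist in *.
    assert (Hx1 : Rabs (x - c) < d) by (eapply Rlt_le_trans; [exact Hx| apply Rmin_l]).
    assert (Hx2 : Rabs (x - c) < eps/2) by (eapply Rlt_le_trans; [exact Hx| apply Rmin_r]).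
    assert (HVc : Rabs (V (clamp x) - V (clamp c)) < eps/2).
    { apply HdV; try apply clamp_in. eapply Rle_lt_trans; [apply clamp_lip|exact Hx1]. }
    replace (phi s * (x - s) + V (clamp x) - (phi s * (c - s) + V (clamp c)))
      with (phi s * (x - c) + (V (clamp x) - V (clamp c))) by ring.
    eapply Rle_lt_trans; [apply Rabs_triang|].
    rewrite Rabs_mult. rewrite (Rabs_pos_eq (phi s)) by (apply Hr; auto).
    assert (phi s * Rabs (x - c) <= 1 * Rabs (x-c)) by
      (apply Rmult_le_compat_r; [apply Rabs_pos| apply Hr; auto]).
    lra.
  - exists w. split; [exact Hw2|]. intros v Hv.
    specialize (Hw1 v Hv). rewrite !clamp_id in Hw1; auto; lra.
Qed.

Lemma DP (phi : R -> R) (Hr : forall x, 0 <= x <= 1 -> 0 <= phi x <= 1)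
  (Hu : UC phi) : forall k, exists V : R -> R, UC V /\
  forall s, 0 <= s <= 1 ->
    (forall u, feas s k u -> Ssum phi k u <= V s) /\
    (exists u, feas s k u /\ Ssum phi k u = V s).
Proof.
  induction k as [|k [V [HV IH]]].
  - exists (fun s => phi s * (1 - s)). split.
    + intros eps Heps. destruct (Hu (eps/2)) as [d [Hd Hd']]; [lra|].
      exists (Rmin d (eps/2)); split; [apply Rmin_glb_lt; lra|].
      intros x y Hx Hy Hxy.
      assert (Hx1 : Rabs (x - y) < d) by (eapply Rlt_le_trans; [exact Hxy| apply Rmin_l]).
      assert (Hx2 : Rabs (x - y) < eps/2) by (eapply Rlt_le_trans; [exact Hxy| apply Rmin_r]).
      specialize (Hd' x y Hx Hy Hx1).
      eapply Rle_lt_trans; [apply gb; [apply Hr; auto| lra]|]. lra.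
    + intros s Hs. split.
      * intros u [H0 [H1 _]]. unfold Ssum; simpl. rewrite H0, H1; lra.
      * exists (fun i => match i with 0%nat => s | _ => 1 end). split.
        -- split; [reflexivity| split; [reflexivity|]].
           intros i Hi. assert (i = 0%nat) by lia. subst; simpl; lra.
        -- unfold Ssum; simpl. reflexivity.
  - set (g := fun s u => phi s * (u - s) + V u).
    assert (Hex : forall s, exists w, 0 <= s <= 1 ->
      s <= w <= 1 /\ forall v, s <= v <= 1 -> g s v <= g s w).
    { intros s. destruct (Rle_dec 0 s); [destruct (Rle_dec s 1)|].
      - destruct (argmax phi V Hr HV s) as [w Hw]; [lra|]. exists w; intros _; exact Hw.
      - exists 0; intros; lra.
      - exists 0; intros; lra. }
    set (U := fun s => proj1_sig (constructive_indefinite_description _ (Hex s))).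
    assert (HU : forall s, 0 <= s <= 1 ->
      s <= U s <= 1 /\ forall v, s <= v <= 1 -> g s v <= g s (U s)).
    { intros s. unfold U. destruct (constructive_indefinite_description _ (Hex s)); simpl; auto. }
    exists (fun s => g s (U s)). split.
    + intros eps Heps.
      destruct (Hu (eps/3)) as [d1 [Hd1 Hd1']]; [lra|].
      destruct (HV (eps/3)) as [d2 [Hd2 Hd2']]; [lra|].
      set (d := Rmin d1 (Rmin d2 (eps/3))).
      assert (Hd : 0 < d) by (unfold d; repeat apply Rmin_glb_lt; lra).
      assert (side : forall s s', 0 <= s -> s <= s' -> s' <= 1 -> s' - s < d ->
        g s (U s) - g s' (U s') < eps /\ g s' (U s') - g s (U s) < eps).
      { intros s s' Hs Hss Hs' Hdd.
        assert (E1 : s' - s < d1) by (eapply Rlt_le_trans; [exact Hdd| apply Rmin_l]).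
        assert (E2 : s' - s < d2) by (eapply Rlt_le_trans; [exact Hdd| unfold d; eapply Rle_trans; [apply Rmin_r|apply Rmin_l]]).
        assert (E3 : s' - s < eps/3) by (eapply Rlt_le_trans; [exact Hdd| unfold d; eapply Rle_trans; [apply Rmin_r|apply Rmin_r]]).
        assert (Hab : Rabs (s - s') < d1) by (rewrite Rabs_minus_sym, Rabs_pos_eq; lra).
        assert (Hp : Rabs (phi s - phi s') < eps/3) by (apply Hd1'; auto; lra).
        assert (Hss' : Rabs (s - s') < eps/3) by (rewrite Rabs_minus_sym, Rabs_pos_eq; lra).
        destruct (HU s ltac:(lra)) as [Hw Hwm].
        destruct (HU s' ltac:(lra)) as [Hw' Hwm'].
        split.
        - destruct (Rle_dec s' (U s)) as [Hc|Hc].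
          + assert (g s' (U s) <= g s' (U s')) by (apply Hwm'; lra).
            assert (Rabs (phi s * (U s - s) - phi s' * (U s - s')) <= Rabs (phi s - phi s') + Rabs (s - s'))
              by (apply gb; [apply Hr; lra| lra]).
            unfold g in *. apply abs_le_b in H0 as [? ?]. lra.
          + assert (g s' s' <= g s' (U s')) by (apply Hwm'; lra).
            assert (HVw : Rabs (V (U s) - V s') < eps/3).
            { apply Hd2'; try lra. rewrite Rabs_left by lra. lra. }
            assert (phi s * (U s - s) <= 1 * (U s - s)) by
              (apply Rmult_le_compat_r; [lra| apply Hr; lra]).
            unfold g in *. apply Rabs_def2 in HVw as [? ?].
            replace (phi s' * (s' - s')) with 0 in H by ring. lra.
        - assert (g s (U s') <= g s (U s)) by (apply Hwm; lra).
          assert (Rabs (phi s * (U s' - s) - phi s' * (U s' - s')) <= Rabs (phi s - phi s') + Rabs (s - s'))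
            by (apply gb; [apply Hr; lra| lra]).
          unfold g in *. apply abs_le_b in H0 as [? ?]. lra. }
      exists d; split; [exact Hd|]. intros x y Hx Hy Hxy.
      destruct (Rle_dec x y) as [Hle|Hle].
      * assert (y - x < d) by (rewrite Rabs_minus_sym, Rabs_pos_eq in Hxy; lra).
        destruct (side x y) as [A B]; try lra. apply Rabs_def1; lra.
      * assert (x - y < d) by (rewrite Rabs_pos_eq in Hxy; lra).
        destruct (side y x) as [A B]; try lra. apply Rabs_def1; lra.
    + intros s Hs. destruct (HU s Hs) as [Hw Hwm]. split.
      * intros u Hf. destruct (feas_range s (S k) u Hf 1 ltac:(lia)) as [Hu1a Hu1b].
        destruct Hf as [H0 [H1 Hm]].
        assert (Hf' : feas (u 1%nat) k (fun i => u (S i))).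
        { split; [reflexivity| split; [exact H1|]]. intros i Hi. apply Hm. lia. }
        destruct (IH (u 1%nat) ltac:(lra)) as [Hle _].
        specialize (Hle _ Hf').
        unfold Ssum in *. rewrite decomp_sum by lia. simpl pred.
        rewrite H0. 
        assert (g s (u 1%nat) <= g s (U s)) by (apply Hwm; lra).
        unfold g in *. lra.
      * destruct (IH (U s) ltac:(lra)) as [_ [u [Hf Heq]]].
        exists (fun i => match i with 0%nat => s | S j => u j end). split.
        -- destruct Hf as [H0 [H1 Hm]].
           split; [reflexivity| split; [exact H1|]].
           intros [|i] Hi; simpl.
           ++ rewrite H0; lra.
           ++ apply Hm; lia.
        -- unfold Ssum in *. rewrite decomp_sum by lia. simpl pred.
           destruct Hf as [H0 _]. simpl. rewrite Heq, H0. unfold g. ring.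
Qed.
Lemma pc_int (psi : R -> R) (m : nat) (t c : nat -> R) :
  t 0%nat = 0 -> (forall i : nat, (i <= m)%nat -> t i <= t (S i)) ->
  (forall i : nat, (1 <= i <= S m)%nat ->
       forall x : R, t (pred i) <= x < t i -> psi x = c i) ->
  forall k, (k <= m)%nat ->
  is_RInt psi 0 (t (S k)) (sum_f_R0 (fun i => c (S i) * (t (S i) - t i)) k).
Proof.
  intros H0 Hm Hc.
  assert (piece : forall i, (i <= m)%nat ->
    is_RInt psi (t i) (t (S i)) (c (S i) * (t (S i) - t i))).
  { intros i Hi. apply (is_RInt_ext (fun _ => c (S i))).
    - intros x Hx. rewrite Rmin_left, Rmax_right in Hx by (apply Hm; auto).
      symmetry. apply (Hc (S i)); [lia| simpl; lra].
    - replace (c (S i) * (t (S i) - t i)) with (scal (t (S i) - t i) (c (S i))).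
      + apply (@is_RInt_const R_NormedModule).
      + unfold scal; simpl; unfold mult; simpl. ring. }
  induction k as [|k IH]; intros Hk.
  - simpl. rewrite <- H0. apply piece; lia.
  - simpl. apply (is_RInt_Chasles psi 0 (t (S k)) (t (S (S k)))).
    + apply IH; lia.
    + apply piece; auto.
Qed.

Fixpoint Lf (t : nat -> R) (k : nat) (x : R) : R :=
  match k with
  | 0%nat => t 0%nat
  | S j => if Rle_dec (t (S j)) x then t (S j) else Lf t j x
  end.

Lemma Lf_piece (t : nat -> R) (m : nat) :
  (forall i : nat, (i <= m)%nat -> t i <= t (S i)) ->
  forall i x, (1 <= i <= S m)%nat -> t (pred i) <= x < t i ->
  forall k, (pred i <= k <= m)%nat -> Lf t k x = t (pred i).
Proof.
  intros Hm i x Hi Hx k. induction k as [|k IH]; intros Hk.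
  - simpl. assert (pred i = 0%nat) by lia. rewrite H; reflexivity.
  - simpl. destruct (Nat.eq_dec (pred i) (S k)) as [E|E].
    + rewrite E in *. destruct Rle_dec; [reflexivity| lra].
    + destruct Rle_dec as [r|r].
      * exfalso. assert (t i <= t (S k)) by (apply (chain t m Hm); lia). lra.
      * apply IH; lia.
Qed.

Lemma Lf_range (t : nat -> R) (m : nat) x :
  t 0%nat = 0 -> (forall i : nat, (i <= m)%nat -> t i <= t (S i)) -> 0 <= x ->
  forall k, (k <= m)%nat -> 0 <= Lf t k x <= x.
Proof.
  intros H0 Hm Hx k. induction k as [|k IH]; intros Hk.
  - simpl; lra.
  - simpl. destruct Rle_dec as [r|r].
    + split; [|exact r]. rewrite <- H0. apply (chain t m Hm); lia.
    + apply IH; lia.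
Qed.
Lemma val_eq (phi psi : R -> R) (m : nat) (t c : nat -> R)
  (Hcont : forall x : R, 0 <= x <= 1 -> continue_in phi (fun y => 0 <= y <= 1) x) :
  t 0%nat = 0 -> t (S m) = 1 -> (forall i : nat, (i <= m)%nat -> t i <= t (S i)) ->
  (forall i : nat, (1 <= i <= S m)%nat ->
       forall x : R, t (pred i) <= x < t i -> psi x = c i) ->
  RInt (fun x => phi x - psi x) 0 1 =
  RInt phi 0 1 - sum_f_R0 (fun i => c (S i) * (t (S i) - t i)) m.
Proof.
  intros H0 H1 Hm Hc.
  apply is_RInt_unique.
  assert (A := RInt_correct _ _ _ (ex_RInt_phi phi Hcont)).
  assert (B := pc_int psi m t c H0 Hm Hc m (le_n m)). rewrite H1 in B.
  exact (@is_RInt_minus R_NormedModule _ _ _ _ _ _ A B).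
Qed.

Theorem proposition4 (phi : R -> R) (m : nat)
  (Hcont : forall x : R, 0 <= x <= 1 -> continue_in phi (fun y => 0 <= y <= 1) x)
  (Hrange : forall x : R, 0 <= x <= 1 -> 0 <= phi x <= 1)
  (Hmono : forall x y : R, 0 <= x -> x <= y -> y <= 1 -> phi x <= phi y)
  (H0 : phi 0 = 0) (H1 : phi 1 = 1)
  (Hm : (1 <= m)%nat) :
  exists psi : R -> R,
    admissible phi m psi /\
    Finite (RInt (fun t => phi t - psi t) 0 1) = c_m phi m.
Proof.
  destruct (DP phi Hrange (UC_phi phi Hcont) m) as [V [_ HV]].
  destruct (HV 0 ltac:(lra)) as [Hub [t [[Ht0 [Ht1 Htm]] Heq]]].
  set (psi := fun x => phi (Lf t m x)).
  assert (Hpc : forall i : nat, (1 <= i <= S m)%nat ->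
       forall x : R, t (pred i) <= x < t i -> psi x = phi (t (pred i))).
  { intros i Hi x Hx. unfold psi. rewrite (Lf_piece t m Htm i x Hi Hx m); auto. lia. }
  assert (Hadm : admissible phi m psi).
  { split.
    - exists t, (fun i => phi (t (pred i))). repeat split; auto.
    - intros x Hx. unfold psi.
      destruct (Lf_range t m x Ht0 Htm ltac:(lra) m (le_n m)).
      apply Hmono; lra. }
  assert (Hval : RInt (fun x => phi x - psi x) 0 1 = RInt phi 0 1 - V 0).
  { rewrite (val_eq phi psi m t (fun i => phi (t (pred i))) Hcont Ht0 Ht1 Htm Hpc).
    rewrite <- Heq. reflexivity. }
  exists psi. split; [exact Hadm|].
  unfold c_m. symmetry. apply is_glb_Rbar_unique. rewrite Hval. split.
  - intros x [psi' [[[t' [c' [H0' [H1' [Hm' Hc']]]]] Hle] ->]].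
    rewrite (val_eq phi psi' m t' c' Hcont H0' H1' Hm' Hc'). simpl.
    assert (Hf : feas 0 m t') by (split; [auto| split; auto]).
    specialize (Hub t' Hf). unfold Ssum in Hub.
    assert (sum_f_R0 (fun i => c' (S i) * (t' (S i) - t' i)) m <=
            sum_f_R0 (fun i => phi (t' i) * (t' (S i) - t' i)) m).
    { apply sum_Rle. intros i Hi.
      destruct (feas_range 0 m t' Hf i ltac:(lia)) as [Ha Hb].
      specialize (Hm' i Hi).
      destruct (Req_dec (t' i) (t' (S i))) as [E|E].
      - rewrite E. lra.
      - assert (psi' (t' i) = c' (S i)) by (apply (Hc' (S i)); [lia| simpl; lra]).
        assert (psi' (t' i) <= phi (t' i)) by (apply Hle; lra).
        apply Rmult_le_compat_r; lra. }
    lra.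
  - intros b Hb. apply Hb. exists psi. split; [exact Hadm|]. rewrite Hval. reflexivity.
Qed.
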